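(* Let $G$ be a graph on $n$ vertices. For any integer $c\ge 2$, there are at most $\frac{2n}{c}$ bridges of $G$ both of whose endpoints have degree larger than $c$.
   Context: A bridge is an edge whose deletion increases the number of connected components of the graph. *)

(* Defs.v *)
From mathcomp Require Import all_boot all_order all_algebra.
Set Implicit Arguments. Unset Strict Implicit. Unset Printing Implicit Defensive.

(* A finite simple graph on vertex type T : finType is given by an adjacency
   relation e : rel T that is symmetric and irreflexive (see the theorem). *)

Definition ncomp (T : finType) (e : rel T) : nat :=
  #|[set [set y | connect e x y] | x : T]|.

Definition del_edge (T : finType) (e : rel T) (x y : T) : rel T :=
  fun u v => e u v && ([set u; v] != [set x; y]).

Definition deg (T : finType) (e : rel T) (x : T) : nat := #|[set y | e x y]|.

Definition is_bridge (T : finType) (e : rel T) (x y : T) : bool :=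
  e x y && (ncomp e < ncomp (del_edge e x y)).

Definition big_bridges (T : finType) (e : rel T) (c : nat) : {set {set T}} :=
  [set S : {set T} | [exists x : T, exists y : T,
     [&& S == [set x; y], is_bridge e x y, c < deg e x & c < deg e y]]].

(* Main.v *)
Require Import Defs.
From mathcomp Require Import all_boot all_order all_algebra zify.
Import Order.TTheory GRing.Theory Num.Theory.
Set Implicit Arguments. Unset Strict Implicit. Unset Printing Implicit Defensive.

Section Aux.
Variable T : finType.

Definition nc (U : {set T}) (r : rel T) : nat :=
  #|[set [set y | connect r x y] | x in U]|.

Lemma nc_mono (U : {set T}) (r r' : rel T) :
  subrel r' r -> nc U r <= nc U r'.
Proof.
move=> sub; rewrite /nc.
pose g (S : {set T}) := [set y | [exists s in S, connect r s y]].
have gE x : g [set y | connect r' x y] = [set y | connect r x y].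
  apply/setP=> y; rewrite !inE; apply/existsP/idP.
    case=> s /andP[]; rewrite inE => /(connect_sub (e:=r') (e':=r)) H1 H2.
    apply: connect_trans (H1 _) H2 => u v /sub; exact: connect1.
  by move=> H; exists x; rewrite inE connect0.
have -> : [set [set y | connect r x y] | x in U] = g @: [set [set y | connect r' x y] | x in U].
  by rewrite -imset_comp; apply: eq_imset => x /=; rewrite gE.
exact: leq_imset_card.
Qed.

Lemma nc_strict (U : {set T}) (r r' : rel T) x y :
  connect_sym r -> subrel r' r -> x \in U -> y \in U ->
  connect r x y -> ~~ connect r' x y -> nc U r < nc U r'.
Proof.
move=> symr sub xU yU cxy ncxy; rewrite /nc.
pose g (S : {set T}) := [set y | [exists s in S, connect r s y]].
have gE x0 : g [set y | connect r' x0 y] = [set y | connect r x0 y].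
  apply/setP=> y0; rewrite !inE; apply/existsP/idP.
    case=> s /andP[]; rewrite inE => /(connect_sub (e:=r') (e':=r)) H1 H2.
    apply: connect_trans (H1 _) H2 => u v /sub; exact: connect1.
  by move=> H; exists x0; rewrite inE connect0.
have -> : [set [set y | connect r x y] | x in U] = g @: [set [set y | connect r' x y] | x in U].
  by rewrite -imset_comp; apply: eq_imset => x0 /=; rewrite gE.
rewrite ltn_neqAle leq_imset_card andbT.
apply/negP => /imset_injP inj.
have : [set y0 | connect r' x y0] = [set y0 | connect r' y y0].
  apply: inj; try exact: imset_f.
  apply: (etrans (gE x)); apply: esym; apply: (etrans (gE y)); apply: esym.
  apply/setP => z; rewrite !inE.
  apply/idP/idP => H; [rewrite symr in cxy|]; exact: connect_trans cxy H.
move/setP/(_ y); rewrite !inE connect0.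
by rewrite (negbTE ncxy).
Qed.

End Aux.

Section Aux2.
Variable T : finType.
Variable e : rel T.
Hypothesis esym : symmetric e.

Lemma del_sym x y : symmetric (del_edge e x y).
Proof. by move=> u v; rewrite /del_edge esym setUC. Qed.

Lemma bridge_disc x y : is_bridge e x y -> ~~ connect (del_edge e x y) x y.
Proof.
case/andP=> exy; apply: contraL => cxy; rewrite -leqNgt.
have E : connect e =2 connect (del_edge e x y).
  move=> u v; apply/idP/idP.
    apply: connect_sub => a b eab.
    case H : ([set a; b] == [set x; y]).
      have : a \in [set x; y] by rewrite -(eqP H) set21.
      have : b \in [set x; y] by rewrite -(eqP H) set22.
      rewrite !inE => /orP[] /eqP -> /orP[] /eqP ->;
        by rewrite ?connect0 // (sym_connect_sym (del_sym x y)).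
    by apply: connect1; rewrite /del_edge eab H.
  apply: connect_sub => a b /andP[eab _]; exact: connect1.
rewrite /ncomp.
have -> : [set [set y0 | connect (del_edge e x y) x0 y0] | x0 : T] = [set [set y0 | connect e x0 y0] | x0 : T].
  by apply: eq_imset => x0; apply/setP => z; rewrite !inE E.
by [].
Qed.
End Aux2.

Section Main.
Variable T : finType.
Variable e : rel T.
Variable c : nat.
Hypothesis esym : symmetric e.
Hypothesis eirr : irreflexive e.

Definition Bset := big_bridges e c.
Definition Hrel (A : {set {set T}}) : rel T := fun u v => e u v && ([set u; v] \notin A).
Definition Qr w z := e w z && ([set w; z] \in Bset).
Definition bdeg w := #|[set z | Qr w z]|.
Definition VB := [set w | [exists z, Qr w z]].

Lemma Hrel_sym A : symmetric (Hrel A).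
Proof. by move=> u v; rewrite /Hrel esym setUC. Qed.

Lemma Bmem S : S \in Bset -> exists x y, [/\ S = [set x; y], is_bridge e x y, c < deg e x & c < deg e y].
Proof.
rewrite inE => /existsP[x /existsP[y /and4P[/eqP -> br dx dy]]].
by exists x, y.
Qed.

Lemma chain k : forall A : {set {set T}}, A \subset Bset -> #|A| = k -> nc VB e + k <= nc VB (Hrel A).
Proof.
elim: k => [|k IH] A sAB cA.
  rewrite addn0; apply: nc_mono => u v /andP[] //.
have : 0 < #|A| by rewrite cA.
rewrite card_gt0 => /set0Pn[s sA].
have sB : s \in Bset := subsetP sAB s sA.
have := IH (A :\ s) (subset_trans (subsetDl _ _) sAB).
rewrite (cardsD1 s A) sA in cA.
have cA' : #|A :\ s| = k by move: cA; rewrite add1n; case.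
move=> /(_ cA') H.
rewrite addnS; apply: (leq_ltn_trans H).
case: (Bmem sB) => x [y [sE br dx dy]].
have exy : e x y by case/andP: br.
apply: (@nc_strict _ _ _ _ x y (sym_connect_sym (Hrel_sym _))).
- move=> u v /andP[euv nA]; rewrite /Hrel euv /=.
  by apply: contra nA; rewrite inE => /andP[].
- by rewrite inE; apply/existsP; exists y; rewrite /Qr -sE sB exy.
- by rewrite inE; apply/existsP; exists x; rewrite /Qr esym setUC -sE sB exy.
- by apply: connect1; rewrite /Hrel -sE !inE eqxx /= exy.
- apply: contra (bridge_disc esym br); apply: connect_sub => u v /andP[euv].
  move=> Huv; apply: connect1; rewrite /del_edge euv -sE /=.
  by apply: contra Huv => /eqP ->.
Qed.


Lemma sum_bdeg : \sum_w bdeg w <= 2 * #|Bset|.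
Proof.
have -> : \sum_w bdeg w = #|[set p : T * T | Qr p.1 p.2]|.
  rewrite /bdeg.
  under eq_bigr => w _ do rewrite -sum1_card big_mkcond /=.
  rewrite pair_big /= -sum1_card big_mkcond /=.
  by rewrite [RHS]big_mkcond; apply: eq_bigr => p _; rewrite !inE.
pose f (p : T * T) := ([set p.1; p.2], (enum_rank p.1 < enum_rank p.2)%N).
rewrite -(@card_in_imset _ _ f).
  rewrite mulnC -card_bool -cardsT -cardsX; apply: subset_leq_card.
  apply/subsetP => q /imsetP[p]; rewrite inE => /andP[_ pB] ->.
  by rewrite inE /= pB inE.
move=> [p1 p2] [q1 q2]; rewrite !inE /= => /andP[ep _] /andP[eq _] [E b].
have np : p1 != p2 by apply: contraTneq ep => ->; rewrite eirr.
have nq : q1 != q2 by apply: contraTneq eq => ->; rewrite eirr.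
have : q1 \in [set p1; p2] by rewrite E set21.
have : q2 \in [set p1; p2] by rewrite E set22.
rewrite !inE => /orP[] /eqP e2 /orP[] /eqP e1; subst; try by [];
  try by rewrite eqxx in nq.
exfalso; move: b np; case: ltngtP => // Hr _; by rewrite (enum_rank_inj (val_inj Hr)) eqxx.
Qed.

Lemma arith (c0 a k h D dg : nat) : 2 <= c0 -> c0 < dg -> dg <= h + k -> h < a -> 0 < k ->
  k <= D -> 4 * c0 <= 4 * a + c0 * D.
Proof.
move=> c2 cd dh ha k1 kD.
have ckD : c0 * k <= c0 * D by rewrite leq_mul2l kD orbT.
apply: leq_trans (_ : 4 * a + c0 * k <= _); last by rewrite leq_add2l.
clear kD; case: k k1 dh ckD => [|[|[|[|k]]]] // _ dh _.
- rewrite muln1; lia.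
- lia.
- lia.
- have : c0 * 4 <= c0 * k.+4 by rewrite leq_mul2l orbC.
  lia.
Qed.

Lemma comp_bound w : 2 <= c -> w \in VB ->
  4 * c <= 4 * #|[set y | connect (Hrel Bset) w y]| +
           c * \sum_(v in [set y | connect (Hrel Bset) w y]) bdeg v.
Proof.
move=> c2 wV.
set C := [set y | connect (Hrel Bset) w y].
have wC : w \in C by rewrite inE connect0.
have [z Qwz] : exists z, Qr w z by move: wV; rewrite inE => /existsP.
have dw : c < deg e w.
  case/andP: Qwz => _ /Bmem [x [y [E _ dx dy]]].
  have : w \in [set x; y] by rewrite -E set21.
  by rewrite !inE => /orP[] /eqP ->.
have b1 : 0 < bdeg w by rewrite /bdeg card_gt0; apply/set0Pn; exists z; rewrite inE.
have degle : deg e w <= #|[set y | Hrel Bset w y]| + bdeg w.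
  apply: leq_trans (_ : #|[set y | Hrel Bset w y] :|: [set z | Qr w z]| <= _).
    apply: subset_leq_card; apply/subsetP => y; rewrite !inE /Hrel /Qr.
    by case: (e w y) => //=; case: ([set w; y] \in Bset).
  by rewrite cardsU leq_subr.
have Hle : #|[set y | Hrel Bset w y]| < #|C|.
  rewrite (cardsD1 w C) wC add1n ltnS; apply: subset_leq_card.
  apply/subsetP => y; rewrite !inE => Hy; rewrite connect1 // andbT.
  by apply: contraTneq Hy => ->; rewrite /Hrel eirr.
have bC : bdeg w <= \sum_(v in C) bdeg v by rewrite (bigD1 w) //= leq_addr.
exact: arith c2 dw degle Hle b1 bC.
Qed.

Lemma main_nat : 2 <= c -> c * #|Bset| <= 2 * #|T|.
Proof.
move=> c2.
set H := Hrel Bset.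
set P := [set [set y | connect H w y] | w in VB].
have Hs : connect_sym H := sym_connect_sym (Hrel_sym Bset).
have triv : trivIset P.
  apply/trivIsetP => A B /imsetP[a _ ->] /imsetP[b _ ->] neq.
  rewrite -setI_eq0; apply: contraNT neq => /set0Pn[z]; rewrite !inE => /andP[az bz].
  apply/eqP/setP => y; rewrite !inE; apply/idP/idP => Hy.
    by apply: connect_trans bz (connect_trans _ Hy); rewrite Hs.
  by apply: connect_trans az (connect_trans _ Hy); rewrite Hs.
have sumC : \sum_(C in P) #|C| <= #|T|.
  have -> : \sum_(C in P) #|C| = \sum_(C in P) \sum_(x in C) 1.
    by apply: eq_bigr => C _; rewrite sum1_card.
  by rewrite -(@big_trivIset _ _ _ _ P (fun=> 1) triv) sum1_card max_card.
have sumD : \sum_(C in P) \sum_(v in C) bdeg v <= 2 * #|Bset|.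
  rewrite -(@big_trivIset _ _ _ _ P bdeg triv); apply: leq_trans sum_bdeg.
  rewrite [X in _ <= X](bigID (fun v => v \in cover P)) /=; exact: leq_addr.
have term : \sum_(C in P) 4 * c <= \sum_(C in P) (4 * #|C| + c * \sum_(v in C) bdeg v).
  apply: leq_sum => C /imsetP[w wV ->]; exact: comp_bound.
rewrite sum_nat_const big_split -!bigop.big_distrr in term.
have chB : #|Bset| <= #|P|.
  have := @chain #|Bset| Bset (subxx _) erefl.
  rewrite /nc -/H -/P; lia.
have t1 : c * #|Bset| <= c * #|P| by rewrite leq_mul2l chB orbT.
have t2 : c * \sum_(C in P) \sum_(v in C) bdeg v <= c * (2 * #|Bset|) by rewrite leq_mul2l sumD orbT.
have term2 : #|P| * (4 * c) <= 4 * (\sum_(C in P) #|C|) + c * (\sum_(C in P) \sum_(v in C) bdeg v) by exact: term.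
nia.
Qed.

End Main.

Local Open Scope ring_scope.

Theorem lemma9p2 (T : finType) (e : rel T) (n c : nat) :
  symmetric e -> irreflexive e -> #|T| = n -> (2 <= c)%N ->
  (#|big_bridges e c|%:R : rat) <= (2 * n)%:R / c%:R.
Proof.
move=> es ei <- c2.
have Hm := main_nat es ei c2.
have c0 : (0 < c)%N by apply: leq_trans c2.
rewrite ler_pdivlMr ?ltr0n // -natrM ler_nat mulnC.
exact: Hm.
Qed.
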